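(* Let $(G,H,T)$ be an RCC loop folder and let $K\le G$ with $HG'\le K$. Then $|G:C_G(t)|\le|K:H|$ for all $t\in T$.
   Context: A loop folder is a triple $(G,H,T)$ with $G$ a finite group, $H\le G$, and $T\subseteq G$ with $1\in T$ such that $T$ is a set of representatives for the right cosets $H^g\backslash G$ for every $g\in G$; it is an RCC loop folder if $T$ is invariant under conjugation by $G$. $G'$ is the commutator subgroup. *)

(* Defs.v *)
From mathcomp Require Import all_boot all_fingroup all_solvable.
Set Implicit Arguments.
Unset Strict Implicit.
Unset Printing Implicit Defensive.
Local Open Scope group_scope.

Definition loop_folder (gT : finGroupType) (G H : {group gT}) (T : {set gT}) :=
  [/\ H \subset G, 1 \in T, T \subset G &
      forall g, g \in G -> is_transversal T (rcosets (H :^ g) G) G].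

Definition rcc_loop_folder (gT : finGroupType) (G H : {group gT}) (T : {set gT}) :=
  loop_folder G H T /\ forall g, g \in G -> T :^ g = T.

(* Main.v *)
Require Import Defs.
From mathcomp Require Import all_boot all_fingroup all_solvable.
Local Open Scope group_scope.

Theorem lemma3p3 (gT : finGroupType) (G H K : {group gT}) (T : {set gT}) :
  rcc_loop_folder G H T ->
  K \subset G -> H * G^`(1) \subset K ->
  forall t, t \in T -> #|G : 'C_G[t]| <= #|K : H|.
Proof.
move=> [[sHG T1 sTG tr] cT] sKG sHGK t Tt.
have trT := tr 1 (group1 G); rewrite conjsg1 in trT.
have Gt : t \in G := subsetP sTG t Tt.
have sG'K : G^`(1) \subset K.
  by apply: subset_trans sHGK; apply: mulG_subr.
have clT : t ^: G \subset T.
  apply/subsetP=> y /imsetP[g Gg ->].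
  by rewrite -(cT g Gg) memJ_conjg.
rewrite index_cent1.
pose f y := H :* (y * t^-1).
rewrite -(@card_in_imset _ _ f).
  apply: subset_leq_card; apply/subsetP=> B /imsetP[y /imsetP[g Gg ->] ->].
  apply/rcosetsP; exists (t ^ g * t^-1) => //.
  have -> : t ^ g * t^-1 = [~ g, t^-1] by rewrite /commg /conjg invgK !mulgA.
  apply: (subsetP sG'K); apply: mem_commg => //; by rewrite groupV.
move=> y z Gy Gz eqf.
have Ty := subsetP clT y Gy; have Tz := subsetP clT z Gz.
have Gz' : z \in G := subsetP sTG z Tz.
have : y * t^-1 \in f z by rewrite -eqf /f rcoset_refl.
rewrite /f mem_rcoset invMg invgK mulgA mulgKV => Hyz.
have yB : y \in H :* z by rewrite mem_rcoset.
have PB : H :* z \in rcosets H G by apply/rcosetsP; exists z.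
have := setI_transversal_pblock trT 1 PB.
move=> E.
have : y \in T :&: (H :* z) by rewrite inE Ty.
have : z \in T :&: (H :* z) by rewrite inE Tz rcoset_refl.
rewrite E !inE => /eqP Ez /eqP Ey; exact: (etrans Ey (esym Ez)).
Qed.
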